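(* For all real numbers $t,s$, $$\lim_{k\to\infty} C_k\, k^t\, \eta_k^{2k+s} = 0.$$
   Context: For integers $k\ge 2$, $C_k:=\frac{(2k-2)!}{(k-1)!}$. Define the polynomials $p_k(z)=1-2z-(7+8k)z^2$, $h_k(z)=1-z-C_k z^{2k+1}$, and $\Delta_k(z)=p_k(z)+4z^{2k+1}C_k h_k(z)$. $\eta_k$ denotes the unique real root of $\Delta_k$ in the open interval $\left(0,\frac{1}{\sqrt{8+8k}}\right)$. *)

(* Defs.v *)
From Stdlib Require Import Reals ClassicalEpsilon Arith Factorial.
From Coquelicot Require Import Coquelicot.
Open Scope R_scope.

Definition Ck (k : nat) : R := INR (Factorial.fact (2 * k - 2)) / INR (Factorial.fact (k - 1)).

Definition pk (k : nat) (z : R) : R := 1 - 2 * z - (7 + 8 * INR k) * z ^ 2.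
Definition hk (k : nat) (z : R) : R := 1 - z - Ck k * z ^ (2 * k + 1).
Definition Deltak (k : nat) (z : R) : R :=
  pk k z + 4 * z ^ (2 * k + 1) * Ck k * hk k z.

Definition is_eta (k : nat) (x : R) : Prop :=
  0 < x /\ x < 1 / sqrt (8 + 8 * INR k) /\ Deltak k x = 0.

Definition eta (k : nat) : R := epsilon (inhabits 0) (is_eta k).

(* Main.v *)
Require Import Defs.
From Stdlib Require Import Reals Lra Lia Psatz ClassicalEpsilon Arith Factorial.
From Coquelicot Require Import Coquelicot.
Open Scope R_scope.

Lemma fact_bound (m n : nat) : (fact (m + n) <= fact m * (m + n) ^ n)%nat.
Proof.
  induction n as [|n IH].
  - rewrite Nat.add_0_r. simpl. lia.
  - rewrite Nat.add_succ_r. simpl (fact (S _)).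
    assert ((m+n)^n <= (S (m+n))^n)%nat by (apply Nat.pow_le_mono_l; lia).
    rewrite Nat.pow_succ_r'.
    assert (fact m * (m+n)^n <= fact m * S (m+n) ^ n)%nat by (apply Nat.mul_le_mono_l; exact H).
    set (A := fact (m+n)) in *. set (B := fact m) in *. set (P := (S (m+n) ^ n)%nat) in *.
    set (Q := ((m+n)^n)%nat) in *. nia.
Qed.

Lemma Ck_bound (k : nat) : (1 <= k)%nat -> 0 < Ck k <= (2 * INR k) ^ k.
Proof.
  intros Hk. unfold Ck.
  assert (H1 : (0 < fact (k-1))%nat) by apply lt_O_fact.
  assert (H2 : (0 < fact (2*k-2))%nat) by apply lt_O_fact.
  pose proof (fact_bound (k-1) (k-1)) as Hf.
  replace (k-1+(k-1))%nat with (2*k-2)%nat in Hf by lia.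
  assert (Hp : ((2*k-2)^(k-1) <= (2*k)^k)%nat).
  { apply Nat.le_trans with ((2*k)^(k-1))%nat.
    apply Nat.pow_le_mono_l; lia. apply Nat.pow_le_mono_r; lia. }
  assert (Hf2 : (fact (2*k-2) <= fact (k-1) * (2*k)^k)%nat).
  { apply Nat.le_trans with (1 := Hf). apply Nat.mul_le_mono_l. exact Hp. }
  apply le_INR in Hf2. rewrite mult_INR, pow_INR, mult_INR in Hf2.
  apply lt_INR in H1. apply lt_INR in H2. change (INR 0) with 0 in H1, H2.
  replace (INR 2) with 2 in Hf2 by (simpl; lra).
  split.
  - apply Rdiv_lt_0_compat; lra.
  - apply Rmult_le_reg_r with (INR (fact (k-1))); [lra|].
    unfold Rdiv. rewrite Rmult_assoc, Rinv_l by lra. lra.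
Qed.

Lemma main_bound (k : nat) (x : R) : (1 <= k)%nat -> 0 < x -> x ^ 2 <= 1 / (8 + 8 * INR k) ->
  Ck k * x ^ (2 * k) <= (/4) ^ k.
Proof.
  intros Hk Hx Hx2.
  destruct (Ck_bound k Hk) as [C0 C1].
  assert (Hk1 : 1 <= INR k) by (apply (le_INR 1); lia).
  rewrite pow_mult.
  apply Rle_trans with ((2 * INR k) ^ k * (1 / (8 + 8 * INR k)) ^ k).
  - apply Rmult_le_compat.
    + lra.
    + apply pow_le; nra.
    + exact C1.
    + apply pow_incr; split; [nra| exact Hx2].
  - rewrite <- Rpow_mult_distr. apply pow_incr. split.
    + apply Rmult_le_pos; [lra|]. apply Rlt_le, Rdiv_lt_0_compat; lra.
    + unfold Rdiv. rewrite Rmult_1_l.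
      apply Rmult_le_reg_r with (8 + 8 * INR k); [lra|].
      rewrite Rmult_assoc, Rinv_l by lra. lra.
Qed.

Lemma Delta_expand (k : nat) (x : R) :
  Deltak k x = 1 - 2 * x - (7 + 8 * INR k) * x ^ 2
    + 4 * x * (Ck k * x ^ (2 * k)) * (1 - x - (Ck k * x ^ (2 * k)) * x).
Proof.
  unfold Deltak, pk, hk. rewrite pow_add. simpl (x ^ 1). ring.
Qed.

Lemma Delta_cont (k : nat) : continuity (fun x => - Deltak k x).
Proof.
  apply derivable_continuous. unfold Deltak, pk, hk. reg.
Qed.

Lemma x0_facts (k : nat) : (2 <= k)%nat ->
  let x0 := 1 / sqrt (8 + 8 * INR k) in
  0 < x0 /\ x0 ^ 2 = 1 / (8 + 8 * INR k) /\ x0 <= /4.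
Proof.
  intros Hk x0. assert (HK : 2 <= INR k) by (apply (le_INR 2); lia).
  assert (Hs : 0 < sqrt (8 + 8 * INR k)) by (apply sqrt_lt_R0; lra).
  assert (Hs2 : sqrt (8 + 8 * INR k) ^ 2 = 8 + 8 * INR k) by (apply pow2_sqrt; lra).
  assert (Hs4 : 4 <= sqrt (8 + 8 * INR k)).
  { replace 4 with (sqrt 16). apply sqrt_le_1_alt; lra.
    replace 16 with (4*4) by lra. apply sqrt_square; lra. }
  unfold x0. split; [|split].
  - apply Rdiv_lt_0_compat; lra.
  - unfold Rdiv. rewrite Rpow_mult_distr, pow_inv, Hs2. ring.
  - unfold Rdiv. rewrite Rmult_1_l. apply Rinv_le_contravar; lra.
Qed.

Lemma eta_exists (k : nat) : (2 <= k)%nat -> exists x, is_eta k x.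
Proof.
  intros Hk. destruct (x0_facts k Hk) as [P0 [P2 P4]].
  set (x0 := 1 / sqrt (8 + 8 * INR k)) in *.
  assert (HK : 2 <= INR k) by (apply (le_INR 2); lia).
  assert (HB := main_bound k x0 ltac:(lia) P0 ltac:(lra)).
  assert (HB0 : 0 <= Ck k * x0 ^ (2 * k)).
  { destruct (Ck_bound k ltac:(lia)). apply Rmult_le_pos; [lra| apply pow_le; lra]. }
  assert (Hq : (/4) ^ k <= /16).
  { replace k with (2 + (k - 2))%nat by lia. rewrite pow_add.
    assert (0 <= (/4)^(k-2) <= 1).
    { split. apply pow_le; lra. rewrite <- (pow1 (k-2)). apply pow_incr; lra. }
    simpl. nra. }
  assert (Hd0 : - Deltak k 0 < 0).
  { rewrite Delta_expand. rewrite pow_i by lia. lra. }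
  assert (Hd1 : 0 < - Deltak k x0).
  { rewrite Delta_expand. set (B := Ck k * x0 ^ (2 * k)) in *.
    assert (E : (7 + 8 * INR k) * x0 ^ 2 = 1 - x0 ^ 2).
    { rewrite P2. field. lra. }
    rewrite E. simpl. nra. }
  destruct (IVT _ 0 x0 (Delta_cont k) P0 Hd0 Hd1) as [z [[Hz1 Hz2] Hz]].
  exists z. unfold is_eta. fold x0.
  assert (z <> 0) by (intro; subst; lra).
  assert (z <> x0) by (intro; subst; lra).
  split; [lra|split; [lra|lra]].
Qed.

Lemma eta_spec (k : nat) : (2 <= k)%nat -> is_eta k (eta k).
Proof. intros Hk. unfold eta. apply epsilon_spec. apply eta_exists; auto. Qed.

Lemma eta_lower (k : nat) (x : R) : (2 <= k)%nat -> is_eta k x ->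
  1 / (9 + 8 * INR k) < x /\ x <= /4 /\ Ck k * x ^ (2 * k) <= (/4) ^ k.
Proof.
  intros Hk [H0 [H1 H2]]. destruct (x0_facts k Hk) as [P0 [P2 P4]].
  set (x0 := 1 / sqrt (8 + 8 * INR k)) in *.
  assert (HK : 2 <= INR k) by (apply (le_INR 2); lia).
  assert (Hx2 : x ^ 2 <= 1 / (8 + 8 * INR k)) by (rewrite <- P2; apply pow_incr; lra).
  assert (HB := main_bound k x ltac:(lia) H0 Hx2).
  assert (HB0 : 0 <= Ck k * x ^ (2 * k)).
  { destruct (Ck_bound k ltac:(lia)). apply Rmult_le_pos; [lra| apply pow_le; lra]. }
  assert (Hq : (/4) ^ k <= /16).
  { replace k with (2 + (k - 2))%nat by lia. rewrite pow_add.
    assert (0 <= (/4)^(k-2) <= 1).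
    { split. apply pow_le; lra. rewrite <- (pow1 (k-2)). apply pow_incr; lra. }
    simpl. nra. }
  split; [|split; lra].
  rewrite Delta_expand in H2. set (B := Ck k * x ^ (2 * k)) in *.
  destruct (Rlt_or_le (1 / (9 + 8 * INR k)) x) as [Hl|Hl]; [exact Hl|exfalso].
  assert (Hl2 : x * (9 + 8 * INR k) <= 1).
  { apply Rmult_le_reg_r with (/ (9 + 8 * INR k)).
    apply Rinv_0_lt_compat; lra. rewrite Rmult_assoc, Rinv_r by lra. lra. }
  assert (Hx7 : (7 + 8 * INR k) * x ^ 2 <= x) by (simpl; nra).
  assert (0 <= 4 * x * B * (1 - x - B * x)) by (apply Rmult_le_pos; nra).
  lra.
Qed.

Lemma lim_ratio : is_lim_seq (fun n => (9 + 8 * INR (S n)) / (9 + 8 * INR n)) 1.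
Proof.
  assert (H1 : is_lim_seq (fun n => 9 + 8 * INR n) p_infty).
  { apply is_lim_seq_le_p_loc with INR; [|exact is_lim_seq_INR].
    exists 0%nat. intros n _. pose proof (pos_INR n). lra. }
  assert (H2 := is_lim_seq_inv _ _ H1 ltac:(discriminate)). simpl in H2.
  assert (H4 := is_lim_seq_scal_l _ 8 _ H2). simpl in H4. rewrite Rmult_0_r in H4.
  assert (H3 := is_lim_seq_plus' (fun _ => 1) _ 1 0 (is_lim_seq_const 1) H4).
  simpl in H3. rewrite Rplus_0_r in H3.
  apply is_lim_seq_ext with (2 := H3). intros n. rewrite S_INR.
  pose proof (pos_INR n). field. lra.
Qed.

Lemma lim_pow (u : nat -> R) (l : R) (N : nat) : is_lim_seq u l ->
  is_lim_seq (fun n => u n ^ N) (l ^ N).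
Proof.
  intros H. induction N as [|N IH].
  - simpl. apply is_lim_seq_const.
  - simpl. apply is_lim_seq_mult'; assumption.
Qed.

Lemma poly_geom (N : nat) : is_lim_seq (fun n => (9 + 8 * INR n) ^ N * (/4) ^ n) 0.
Proof.
  set (a := fun n => (9 + 8 * INR n) ^ N * (/4) ^ n).
  assert (Hpos : forall n, 0 < a n).
  { intro n. unfold a. pose proof (pos_INR n). apply Rmult_lt_0_compat; apply pow_lt; lra. }
  assert (Hs : ex_series (fun n => Rabs (a n))).
  { apply ex_series_DAlembert with (/4); [lra| intro n; specialize (Hpos n); lra |].
    assert (H := is_lim_seq_mult' _ _ _ _ (lim_pow _ _ N lim_ratio) (is_lim_seq_const (/4))).
    rewrite pow1, Rmult_1_l in H.
    apply is_lim_seq_ext with (2 := H). intro n.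
    rewrite Rabs_pos_eq by (apply Rlt_le, Rdiv_lt_0_compat; apply Hpos).
    unfold a. pose proof (pos_INR n). rewrite S_INR. simpl ((/4)^(S n)).
    unfold Rdiv. rewrite Rpow_mult_distr, pow_inv.
    field. split; apply pow_nonzero; lra. }
  apply ex_series_lim_0 in Hs.
  apply is_lim_seq_ext with (2 := Hs). intro n. apply Rabs_pos_eq, Rlt_le, Hpos.
Qed.

Lemma term_bound (t s : R) (N : nat) (k : nat) : (2 <= k)%nat -> Rabs t + Rabs s <= INR N ->
  0 <= Ck k * Rpower (INR k) t * Rpower (eta k) (2 * INR k + s) <= (9 + 8 * INR k) ^ N * (/4) ^ k.
Proof.
  intros Hk HN.
  pose proof (eta_spec k Hk) as He.
  destruct (eta_lower k (eta k) Hk He) as [L1 [L2 L3]].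
  destruct He as [E0 _].
  set (x := eta k) in *.
  assert (HK : 2 <= INR k) by (apply (le_INR 2); lia).
  destruct (Ck_bound k ltac:(lia)) as [C0 _].
  set (M := 9 + 8 * INR k).
  assert (Ex : Rpower x (2 * INR k + s) = x ^ (2 * k) * Rpower x s).
  { rewrite Rpower_plus. f_equal. rewrite <- Rpower_pow by lra. f_equal. rewrite mult_INR. simpl. ring. }
  rewrite Ex.
  assert (Pt : 0 < Rpower (INR k) t) by apply exp_pos.
  assert (Ps : 0 < Rpower x s) by apply exp_pos.
  assert (Bt : Rpower (INR k) t <= Rpower M (Rabs t)).
  { apply Rle_trans with (Rpower (INR k) (Rabs t)).
    apply Rle_Rpower; [lra| apply Rle_abs].
    apply Rle_Rpower_l; [apply Rabs_pos| unfold M; lra]. }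
  assert (Hix : 1 <= / x <= M).
  { assert (HM : x * M > 1).
    { apply Rmult_lt_reg_r with (/ M). apply Rinv_0_lt_compat; unfold M; lra.
      rewrite Rmult_assoc, Rinv_r by (unfold M; lra). fold M in L1. unfold Rdiv in L1. lra. }
    split.
    - rewrite <- Rinv_1. apply Rinv_le_contravar; lra.
    - apply Rmult_le_reg_l with x; [lra|]. rewrite Rinv_r by lra. lra. }
  assert (Bs : Rpower x s <= Rpower M (Rabs s)).
  { assert (Rpower x s = Rpower (/ x) (- s)).
    { unfold Rpower. rewrite ln_Rinv by lra. f_equal. ring. }
    rewrite H. apply Rle_trans with (Rpower (/ x) (Rabs s)).
    apply Rle_Rpower; [lra| rewrite <- Rabs_Ropp; apply Rle_abs].
    apply Rle_Rpower_l; [apply Rabs_pos| split; [apply Rinv_0_lt_compat|]; lra]. }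
  assert (BM : Rpower M (Rabs t) * Rpower M (Rabs s) <= M ^ N).
  { rewrite <- Rpower_plus. rewrite <- Rpower_pow by (unfold M; lra).
    apply Rle_Rpower; [unfold M; lra| exact HN]. }
  set (B := Ck k * x ^ (2 * k)) in *.
  assert (B0 : 0 <= B) by (apply Rmult_le_pos; [lra| apply pow_le; lra]).
  assert (Q0 : 0 <= (/4) ^ k) by (apply pow_le; lra).
  replace (Ck k * Rpower (INR k) t * (x ^ (2 * k) * Rpower x s))
    with (B * (Rpower (INR k) t * Rpower x s)) by (unfold B; ring).
  split.
  - apply Rmult_le_pos; [lra| apply Rmult_le_pos; lra].
  - rewrite Rmult_comm. apply Rmult_le_compat; try lra.
    + apply Rmult_le_pos; lra.
    + apply Rle_trans with (2 := BM). apply Rmult_le_compat; lra.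
Qed.

Theorem lemma2 (t s : R) :
  is_lim_seq
    (fun k : nat => Ck k * Rpower (INR k) t * Rpower (eta k) (2 * INR k + s))
    0.
Proof.
  destruct (INR_unbounded (Rabs t + Rabs s)) as [N HN].
  apply is_lim_seq_le_le_loc with (u := fun _ => 0) (w := fun k => (9 + 8 * INR k) ^ N * (/4) ^ k).
  - exists 2%nat. intros n Hn. apply term_bound; [exact Hn| lra].
  - apply is_lim_seq_const.
  - apply poly_geom.
Qed.
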